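(* There exists $n_0$ such that for every $n\ge n_0$, \[\mathrm{ex}(n,T_1,C_4)=\mathcal{N}(T_1,F(n))=\begin{cases}\binom{n}{2}-\frac{3(n-1)}{2} & \text{if } n \text{ is odd},\\[2pt] \binom{n}{2}-2n+3 & \text{if } n \text{ is even}.\end{cases}\]
   Context: $T_1$ (the paw) is the graph on $4$ vertices consisting of a triangle and one further vertex joined to exactly one vertex of the triangle. $C_4$ is the cycle on $4$ vertices. $F(n)$ is the friendship graph on $n$ vertices: it has a vertex $v$ of degree $n-1$, and on the remaining $n-1$ vertices a matching with $\lfloor (n-1)/2\rfloor$ edges (and no other edges). For graphs $H,G$, $\mathcal{N}(H,G)$ is the number of subgraphs of $G$ isomorphic to $H$, and $\mathrm{ex}(n,H,F)$ is the maximum of $\mathcal{N}(H,G)$ over $F$-free graphs $G$ on $n$ vertices. *)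

(* Defs.v *)
From mathcomp Require Import all_boot all_order.
Set Implicit Arguments. Unset Strict Implicit. Unset Printing Implicit Defensive.

Definition simple_graph (T : finType) (E : {set {set T}}) : bool :=
  [forall e in E, #|e| == 2].

(* N(H, G): number of subgraphs (V', E') of G (vertex set V', edge set E' with
   E' a subset of E(G)) isomorphic to H, where H has vertex set 'I_k and edge
   set EH.  (V', E') is isomorphic to H iff there is a bijection
   f : 'I_k -> V' mapping EH onto E'. *)
Definition num_copies (k : nat) (EH : {set {set 'I_k}})
    (T : finType) (EG : {set {set T}}) : nat :=
  #|[set p : {set T} * {set {set T}} |
      (p.2 \subset EG) &&
      [exists f : {ffun 'I_k -> T},
         [&& injectiveb f, (f @: [set: 'I_k]) == p.1 &
             ([set f @: e | e : {set 'I_k} in EH] == p.2)]]]|.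

Definition ex_gen (n : nat) (k : nat) (EH : {set {set 'I_k}})
    (l : nat) (EF : {set {set 'I_l}}) : nat :=
  \max_(E : {set {set 'I_n}} | simple_graph E && (num_copies EF E == 0))
     num_copies EH E.

Definition paw : {set {set 'I_4}} :=
  [set [set (inord 0 : 'I_4); inord 1]; [set (inord 1 : 'I_4); inord 2]; [set (inord 0 : 'I_4); inord 2];
       [set (inord 0 : 'I_4); inord 3]].

Definition C4 : {set {set 'I_4}} :=
  [set [set (inord 0 : 'I_4); inord 1]; [set (inord 1 : 'I_4); inord 2]; [set (inord 2 : 'I_4); inord 3];
       [set (inord 3 : 'I_4); inord 0]].

(* Friendship graph F(n) on 'I_n: vertex 0 joined to all others, plus the
   matching {1,2},{3,4},... with floor((n-1)/2) edges. *)
Definition friendship (n : nat) : {set {set 'I_n}} :=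
  [set [set i; j] | i in 'I_n, j in 'I_n &
     ((val i == 0) && (val j != 0)) || (odd (val i) && (val j == (val i).+1))].

(* Main.v *)
Require Import Defs.
From mathcomp Require Import all_boot all_order.
From mathcomp Require Import zify.
Set Implicit Arguments. Unset Strict Implicit. Unset Printing Implicit Defensive.

Lemma set2_eq (T : finType) (a b c d : T) :
  [set a; b] = [set c; d] -> (a = c /\ b = d) \/ (a = d /\ b = c).
Proof.
move=> E.
have ha : a \in [set c; d] by rewrite -E !inE eqxx.
have hb : b \in [set c; d] by rewrite -E !inE eqxx orbT.
have hc : c \in [set a; b] by rewrite E !inE eqxx.
have hd : d \in [set a; b] by rewrite E !inE eqxx orbT.
move: ha hb hc hd; rewrite !inE => /orP[]/eqP ha /orP[]/eqP hb /orP[]/eqP hc /orP[]/eqP hd;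
  subst; auto.
Qed.

Definition adj (T : finType) (E : {set {set T}}) (x y : T) := [set x; y] \in E.

Lemma adjC (T : finType) (E : {set {set T}}) x y : adj E x y = adj E y x.
Proof. by rewrite /adj setUC. Qed.

Lemma adj_neq (T : finType) (E : {set {set T}}) x y :
  simple_graph E -> adj E x y -> x != y.
Proof.
move=> /forall_inP sE /sE; rewrite cards2.
by case: (x != y).
Qed.

Definition i0 : 'I_4 := inord 0.
Definition i1 : 'I_4 := inord 1.
Definition i2 : 'I_4 := inord 2.
Definition i3 : 'I_4 := inord 3.

Lemma setT4 : [set: 'I_4] = [set i0; i1; i2; i3].
Proof.
apply/setP => -[[|[|[|[|i]]]] Hi]; rewrite !inE //;
  by rewrite -!val_eqE /= !inordK.
Qed.

Definition f4 (T : finType) (a b c d : T) : {ffun 'I_4 -> T} :=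
  [ffun i : 'I_4 => nth a [:: a; b; c; d] i].

Lemma f4E (T : finType) (a b c d : T) :
  [/\ f4 a b c d i0 = a, f4 a b c d i1 = b, f4 a b c d i2 = c & f4 a b c d i3 = d].
Proof. by rewrite /f4 /i0 /i1 /i2 /i3 !ffunE !inordK. Qed.

Lemma f4_inj (T : finType) (a b c d : T) :
  a != b -> a != c -> a != d -> b != c -> b != d -> c != d ->
  injectiveb (f4 a b c d).
Proof.
move=> ab ac ad bc bd cd; apply/injectiveP.
move=> [[|[|[|[|i]]]] Hi] [[|[|[|[|j]]]] Hj] //; rewrite /f4 !ffunE /= => E;
  try (by apply: val_inj); subst;
  by rewrite ?eqxx in ab ac ad bc bd cd.
Qed.

Lemma paw_img (T : finType) (f : 'I_4 -> T) :
  [set f @: e | e : {set 'I_4} in paw] =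
  [set [set f i0; f i1]; [set f i1; f i2]; [set f i0; f i2]; [set f i0; f i3]].
Proof. by rewrite /paw !imsetU !imset_set1 !imsetU !imset_set1. Qed.

Lemma C4_img (T : finType) (f : 'I_4 -> T) :
  [set f @: e | e : {set 'I_4} in C4] =
  [set [set f i0; f i1]; [set f i1; f i2]; [set f i2; f i3]; [set f i3; f i0]].
Proof. by rewrite /C4 !imsetU !imset_set1 !imsetU !imset_set1. Qed.

Lemma setT_img (T : finType) (f : 'I_4 -> T) :
  f @: [set: 'I_4] = [set f i0; f i1; f i2; f i3].
Proof. by rewrite setT4 !imsetU !imset_set1. Qed.

Definition C4free (T : finType) (E : {set {set T}}) :=
  forall a b c d, adj E a b -> adj E b c -> adj E c d -> adj E d a ->
    a != c -> b != d -> False.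

Lemma C4free_of (T : finType) (E : {set {set T}}) :
  simple_graph E -> num_copies C4 E == 0 -> C4free E.
Proof.
move=> sE c0 a b c d ab bc cd da ac bd.
have nab := adj_neq sE ab; have nbc := adj_neq sE bc.
have ncd := adj_neq sE cd; have nda := adj_neq sE da.
set f := f4 a b c d.
have fi : injectiveb f.
  by apply: f4_inj => //; rewrite eq_sym.
move: c0; rewrite /num_copies cards_eq0 => /eqP/setP/(_ (f @: [set: 'I_4], [set f @: e | e : {set 'I_4} in C4])).
rewrite !inE /= => /negP; apply.
apply/andP; split; last first.
  by apply/existsP; exists f; rewrite fi !eqxx.
rewrite C4_img; case: (f4E a b c d) => -> -> -> ->.
apply/subsetP => e; rewrite !inE => /orP[/orP[/orP[]|]|] /eqP ->; rewrite -/(adj E _ _) //.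

Qed.

Lemma uniq_cn (T : finType) (E : {set {set T}}) x y z1 z2 :
  C4free E -> x != y -> adj E x z1 -> adj E y z1 -> adj E x z2 -> adj E y z2 -> z1 = z2.
Proof.
move=> c4 xy h1 h2 h3 h4; apply/eqP/negPn/negP => nz.
by apply: (c4 x z1 y z2) => //; rewrite adjC.
Qed.

Definition Qs (T : finType) (E : {set {set T}}) :=
  [set q : T * T * T * T | [&& adj E q.1.1.1 q.1.1.2, adj E q.1.1.1 q.1.2,
     adj E q.1.1.2 q.1.2, adj E q.1.1.1 q.2, q.2 != q.1.1.2 & q.2 != q.1.2]].

Definition Qlt (T : finType) (E : {set {set T}}) :=
  [set q in Qs E | enum_rank q.1.1.2 < enum_rank q.1.2].

Definition Gq (T : finType) (q : T * T * T * T) : {set T} * {set {set T}} :=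
  ([set q.1.1.1; q.1.1.2; q.1.2; q.2],
   [set [set q.1.1.1; q.1.1.2]; [set q.1.1.2; q.1.2]; [set q.1.1.1; q.1.2]; [set q.1.1.1; q.2]]).

Lemma inj4_neq (T : finType) (f : {ffun 'I_4 -> T}) : injectiveb f ->
  [&& f i0 != f i1, f i0 != f i2, f i0 != f i3, f i1 != f i2, f i1 != f i3 & f i2 != f i3].
Proof.
move/injectiveP => fi.
by rewrite !(inj_eq fi) -!val_eqE /= !inordK.
Qed.

Lemma copies_Qlt (T : finType) (E : {set {set T}}) :
  num_copies paw E <= #|Qlt E|.
Proof.
rewrite /num_copies; apply: leq_trans (leq_imset_card (@Gq T) (Qlt E)).
apply: subset_leq_card; apply/subsetP => -[V' E'].
rewrite inE /= => /andP[sub /existsP[f /and3P[fi /eqP fV /eqP fE]]].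
rewrite setT_img in fV; rewrite paw_img in fE.
move: (inj4_neq fi) => /and3P[n01 n02 /and4P[n03 n12 n13 n23]].
have n31 : f i3 != f i1 by rewrite eq_sym.
have n32 : f i3 != f i2 by rewrite eq_sym.
have inE' : forall x y, [set x; y] \in E' -> adj E x y.
  by move=> x y h; rewrite /adj (subsetP sub).
have e01 : adj E (f i0) (f i1) by apply: inE'; rewrite -fE !inE eqxx.
have e12 : adj E (f i1) (f i2) by apply: inE'; rewrite -fE !inE eqxx !orbT.
have e02 : adj E (f i0) (f i2) by apply: inE'; rewrite -fE !inE eqxx !orbT.
have e03 : adj E (f i0) (f i3) by apply: inE'; rewrite -fE !inE eqxx !orbT.
have rk : enum_rank (f i1) != enum_rank (f i2) by rewrite (inj_eq enum_rank_inj).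
case: (ltngtP (enum_rank (f i1)) (enum_rank (f i2))) => [lt|gt|/val_inj eq]; last first.
- by rewrite eq eqxx in rk.
- apply/imsetP; exists (f i0, f i2, f i1, f i3).
    rewrite !inE /= gt e02 e01 e03 (adjC _ (f i2)) e12 n31 n32.
    by [].
  rewrite /Gq /= -fV -fE; congr (_, _).
    by apply/setP => x; rewrite !inE;
      case: (x == f i0); case: (x == f i1); case: (x == f i2); case: (x == f i3).
  apply/setP => x; rewrite !inE (setUC [set f i2]).
  by case: (x == [set f i0; f i1]); case: (x == [set f i1; f i2]);
    case: (x == [set f i0; f i2]); case: (x == [set f i0; f i3]).
- apply/imsetP; exists (f i0, f i1, f i2, f i3).
    by rewrite !inE /= lt e02 e01 e03 e12 n31 n32.
  by rewrite /Gq /= -fV -fE.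
Qed.

Definition swq (T : finType) (q : T * T * T * T) : T * T * T * T :=
  (q.1.1.1, q.1.2, q.1.1.2, q.2).

Lemma swq_inj (T : finType) : injective (@swq T).
Proof. by move=> [[[a b] c] d] [[[a' b'] c'] d'] /= [-> -> -> ->]. Qed.

Lemma Qlt_Qs (T : finType) (E : {set {set T}}) : 2 * #|Qlt E| <= #|Qs E|.
Proof.
have cs : #|(@swq T) @: Qlt E| = #|Qlt E| by rewrite card_imset //; apply: swq_inj.
have i0' : Qlt E :&: (@swq T) @: Qlt E = set0.
  apply/setP => q; rewrite !inE; apply/negbTE/negP => /andP[/andP[_ lt] /imsetP[q' ]].
  rewrite !inE => /andP[_ lt'] eq; subst q; move: lt lt' => /=.
  by move=> h1 h2; move: (ltn_trans h1 h2); rewrite ltnn.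
have su : Qlt E :|: (@swq T) @: Qlt E \subset Qs E.
  apply/subsetP => q; rewrite !inE => /orP[/andP[-> _] //|/imsetP[[[[a b] c] d]]].
  rewrite !inE /= => /andP[/and4P[ab ac bc /and3P[ad db dc]] _] ->.
  by rewrite /swq /= ab ac ad db dc adjC bc.
move: (subset_leq_card su); rewrite cardsU i0' cards0 subn0 cs.
by rewrite mul2n -addnn.
Qed.

Lemma card_pairs (T1 T2 : finType) (A : {set T1}) (B : T1 -> {set T2}) :
  #|[set p : T1 * T2 | (p.1 \in A) && (p.2 \in B p.1)]| = \sum_(x in A) #|B x|.
Proof.
rewrite -sum1_card.
rewrite (eq_bigl (fun p : T1 * T2 => (p.1 \in A) && (p.2 \in B p.1))); last first.
  by move=> p; rewrite inE.
rewrite -(pair_big_dep (fun x => x \in A) (fun x y => y \in B x) (fun _ _ => 1)) /=.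
by apply: eq_bigr => x _; rewrite sum1_card.
Qed.

Lemma card3 (T : finType) (a b c : T) : a != b -> a != c -> b != c ->
  #|[set a; b; c]| = 3.
Proof.
move=> ab ac bc; rewrite -setUA cardsU1 cards2 bc !inE negb_or ab ac.
by [].
Qed.

Definition Trs (T : finType) (E : {set {set T}}) :=
  [set t : T * T * T | [&& adj E t.1.1 t.1.2, adj E t.1.1 t.2 & adj E t.1.2 t.2]].

Lemma Qs_out (T : finType) (E : {set {set T}}) a b c d :
  C4free E -> simple_graph E -> (a, b, c, d) \in Qs E -> ~~ adj E b d && ~~ adj E c d.
Proof.
move=> c4 sE; rewrite inE /= => /and4P[ab ac bc /and3P[ad db dc]].
apply/andP; split; apply/negP => h.
- have := uniq_cn c4 (adj_neq sE ab) ac bc ad h.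
  by move=> e; rewrite e eqxx in dc.
- have := uniq_cn c4 (adj_neq sE ac) ab _ ad h.
  by rewrite adjC => /(_ bc) e; rewrite e eqxx in db.
Qed.

Definition rotq (T : finType) (x : (T * T * T * T) * 'I_3) : (T * T * T) * T :=
  let: (a, b, c, d) := x.1 in
  if val x.2 == 0 then ((a, b, c), d)
  else if val x.2 == 1 then ((b, c, a), d) else ((c, a, b), d).

Lemma Qs_Trs (T : finType) (E : {set {set T}}) :
  C4free E -> simple_graph E -> 3 * #|Qs E| <= #|Trs E| * (#|T| - 3).
Proof.
move=> c4 sE.
pose Tg := [set p : (T * T * T) * T | (p.1 \in Trs E) &&
              (p.2 \in ~: [set p.1.1.1; p.1.1.2; p.1.2])].
have h1 : #|Tg| <= #|Trs E| * (#|T| - 3).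
  rewrite /Tg (card_pairs (Trs E) (fun t => ~: [set t.1.1; t.1.2; t.2])).
  rewrite -sum_nat_const; apply: leq_sum => -[[a b] c]; rewrite inE /= => /and3P[ab ac bc].
  have := cardsC [set a; b; c]; rewrite card3 ?(adj_neq sE) // => <-.
  by rewrite addKn.
apply: leq_trans h1.
have -> : 3 * #|Qs E| = #|setX (Qs E) [set: 'I_3]| by rewrite cardsX cardsT card_ord mulnC.
rewrite -(card_in_imset (f := @rotq T)); last first.
  move=> [[[[a b] c] d] r] [[[[a' b'] c'] d'] r'] /setXP[q _] /setXP[q' _].
  move: (Qs_out c4 sE q) (Qs_out c4 sE q') => /andP[nb nc] /andP[nb' nc'].
  move: q q'; rewrite !inE /= => /and4P[ab ac bc /and3P[ad db dc]] /and4P[ab' ac' bc' /and3P[ad' db' dc']].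
  case: r => [[|[|[|r]]] Hr]; case: r' => [[|[|[|r']]] Hr'] //= [*]; subst;
    try (by congr (_, _, _, _, _); apply: val_inj);
    by rewrite ?ad ?ad' in nb nc nb' nc'.
apply: subset_leq_card; apply/subsetP => p /imsetP[[[[[a b] c] d] r]].
move=> /setXP[q _] ->.
move: (Qs_out c4 sE q); move: q; rewrite !inE /= => /and4P[ab ac bc /and3P[ad db dc]] /andP[nb nc].
have da : d != a by rewrite eq_sym (adj_neq sE ad).
rewrite /rotq /=; case: ifP => _; last case: ifP => _; rewrite /= ?negb_or;
  by rewrite ?ab ?ac ?bc ?da ?db ?dc ?(adjC E b a) ?(adjC E c a) ?(adjC E c b) ?ab ?ac ?bc.
Qed.

Lemma inv_even (T : finType) (A : {set T}) (f : T -> T) :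
  (forall x, x \in A -> f x \in A) -> (forall x, x \in A -> f (f x) = x) ->
  (forall x, x \in A -> f x != x) -> ~~ odd #|A|.
Proof.
move=> fA ff fn.
pose B := [set x | enum_rank x < enum_rank (f x)].
have e1 : f @: (A :&: B) = A :\: B.
  apply/setP => y; apply/imsetP/idP.
  - move=> [x]; rewrite !inE => /andP[xA lt] ->.
    rewrite fA // ff // andbT; apply/negP => h; move: (ltn_trans h lt); rewrite ltnn.
    by [].
  - rewrite !inE => /andP[yB yA]; exists (f y); last by rewrite ff.
    rewrite !inE fA // ff //.
    have : enum_rank (f y) != enum_rank y by rewrite (inj_eq enum_rank_inj) fn.
    rewrite neq_ltn => /orP[h|h] //; case/negP: yB; by [].
have c1 : #|f @: (A :&: B)| = #|A :&: B|.
  apply: card_in_imset => x y; rewrite !inE => /andP[xA _] /andP[yA _] e.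
  by rewrite -(ff x xA) e ff.
rewrite -(cardsID B A) -e1 c1 addnn odd_double.
by [].
Qed.

Definition nocn (T : finType) (E : {set {set T}}) (x y : T) :=
  ~~ [exists z, adj E x z && adj E y z].

Definition cn (T : finType) (E : {set {set T}}) (x y : T) :=
  odflt x [pick z | adj E x z && adj E y z].

Lemma cn_spec (T : finType) (E : {set {set T}}) x y :
  ~~ nocn E x y -> adj E x (cn E x y) && adj E y (cn E x y).
Proof.
rewrite /nocn negbK /cn => /existsP[z hz].
by case: pickP => [z' -> //|/(_ z)]; rewrite hz.
Qed.

Lemma nocnC (T : finType) (E : {set {set T}}) x y : nocn E x y = nocn E y x.
Proof.
by rewrite /nocn; congr (~~ _); apply/existsP/existsP => -[z]; exists z; rewrite andbC.
Qed.


Lemma parity (T : finType) (E : {set {set T}}) w :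
  simple_graph E -> C4free E -> ~~ odd #|T| ->
  [exists u, (u != w) && nocn E w u] ||
  [exists p : T * T, [&& adj E p.1 w, adj E p.1 p.2, p.2 != w & nocn E p.1 p.2]].
Proof.
move=> sE c4 ev; apply/negPn/negP; rewrite negb_or => /andP[H1 H2].
have {}H1 : forall u, u != w -> ~~ nocn E w u.
  by move=> u uw; apply/negP => h; case/negP: H1; apply/existsP; exists u; rewrite uw.
have {}H2 : forall x y, adj E x w -> adj E x y -> y != w -> ~~ nocn E x y.
  move=> x y xw xy yw; apply/negP => h; case/negP: H2; apply/existsP; exists (x, y).
  by rewrite /= xw xy yw h.
pose S := [set p : T * T | [&& adj E w p.1, adj E p.1 p.2 & p.2 != w]].
have cS : #|S| = #|T|.-1.
  have e : [set p.2 | p in S] = [set~ w].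
    apply/setP => u; rewrite !inE; apply/imsetP/idP.
    - by move=> [[x u'] ]; rewrite inE /= => /and3P[_ _ ?] ->.
    - move=> uw; have /andP[h1 h2] := cn_spec (H1 u uw).
      by exists (cn E w u, u) => //; rewrite inE /= h1 adjC h2 uw.
  rewrite -(cardsC1 w) -e card_in_imset //.
  move=> [x u] [x' u']; rewrite !inE /= => /and3P[wx xu uw] /and3P[wx' xu' uw'] /= ee.
  subst u'; congr (_, _); apply: (uniq_cn c4 (x := w) (y := u)) => //.
  - by rewrite eq_sym.
  - by rewrite adjC.
  - by rewrite adjC.
pose io (p : T * T) := if p.2 == cn E p.1 w then (p.2, p.1) else (p.1, cn E p.1 p.2).
have cnE : forall x y z, x != y -> adj E x z -> adj E y z -> cn E x y = z.
  move=> x y z xy xz yz.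
  have /andP[h1 h2] : adj E x (cn E x y) && adj E y (cn E x y).
    by apply: cn_spec; apply/negPn/existsP; exists z; rewrite xz yz.
  by apply: (uniq_cn c4 xy).
have nwx : forall x, adj E w x -> x != w by move=> x h; rewrite eq_sym (adj_neq sE h).
have z0P : forall x, adj E w x -> adj E x (cn E x w) && adj E w (cn E x w).
  move=> x wx; apply: cn_spec; rewrite nocnC; exact: H1 (nwx x wx).
have vP : forall x u, (x, u) \in S -> adj E x (cn E x u) && adj E u (cn E x u).
  move=> x u; rewrite inE /= => /and3P[wx xu uw]; apply: cn_spec.
  by apply: H2 => //; rewrite adjC.
have ioS : forall p, p \in S -> io p \in S /\ io (io p) = p /\ io p != p.
  move=> [x u] pS; have := pS; rewrite inE /= => /and3P[wx xu uw].
  have /andP[xz0 wz0] := z0P x wx; have /andP[xv uv] := vP x u pS.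
  have nxu := adj_neq sE xu.
  rewrite /io /=; case: eqP => [uz0|nuz0].
  - subst u; rewrite inE /= wz0 adjC xz0 (nwx x wx) /=.
    rewrite (cnE (cn E x w) w x) ?eqxx //; last by rewrite adjC.
    split=> //; split=> //.
    by apply/negP => /eqP [] e; rewrite e eqxx in nxu.
  - have vw : cn E x u != w.
      apply/negP => /eqP e; apply: nuz0; symmetry; apply: cnE.
      + exact: nwx x wx.
      + by [].
      + by rewrite adjC -e.
    have nxv := adj_neq sE xv.
    have vz0 : cn E x u != cn E x w.
      apply/negP => /eqP e.
      have := uniq_cn c4 (x := w) (y := u) (z1 := x) (z2 := cn E x u).
      rewrite eq_sym uw wx adjC xu uv e wz0 => /(_ isT isT isT isT isT) ex.
      by rewrite {1}ex e eqxx in nxv.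
    rewrite inE /= wx xv vw (negbTE vz0) (cnE x (cn E x u) u) //; last by rewrite adjC.
    split=> //; split=> //.
    apply/negP => /eqP [] e; move: (adj_neq sE uv); by rewrite e eqxx.
have := inv_even (A := S) (f := io).
rewrite cS => /(_ (fun p h => (ioS p h).1) (fun p h => (ioS p h).2.1) (fun p h => (ioS p h).2.2)).
have : 0 < #|T| by apply/card_gt0P; exists w.
by move: ev; case: #|T| => //= n; rewrite negbK => ->.
Qed.


Lemma cn_of (T : finType) (E : {set {set T}}) x y z :
  adj E x z -> adj E y z -> nocn E x y = false.
Proof. by move=> h1 h2; rewrite /nocn negbK; apply/existsP; exists z; rewrite h1 h2. Qed.

Definition hw (T : finType) (E : {set {set T}}) (w : T) : T * T :=
  if [pick u | (u != w) && nocn E w u] is Some u then (w, u)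
  else if [pick p : T * T | [&& adj E p.1 w, adj E p.1 p.2, p.2 != w & nocn E p.1 p.2]]
       is Some p then (p.2, w) else (w, w).

Lemma hw_spec (T : finType) (E : {set {set T}}) w :
  simple_graph E -> C4free E -> ~~ odd #|T| ->
  (exists u, [/\ hw E w = (w, u), u != w & nocn E w u]) \/
  (exists x y, [/\ hw E w = (y, w), adj E x w, adj E x y, y != w & nocn E x y]).
Proof.
move=> sE c4 ev; rewrite /hw.
case: pickP => [u /andP[uw nc]|n1]; first by left; exists u.
case: pickP => [[x y] /and4P[xw xy yw nc]|n2]; first by right; exists x, y.
have := parity w sE c4 ev.
case/orP => /existsP[p hp]; [by rewrite n1 in hp | by rewrite n2 in hp].
Qed.

Lemma pairs_bound (T : finType) (E : {set {set T}}) :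
  simple_graph E -> C4free E ->
  #|Qs E| + #|Trs E| + (if odd #|T| then 0 else #|T|) <= #|T| * (#|T| - 1).
Proof.
move=> sE c4.
pose f1 (q : T * T * T * T) := (q.1.1.2, q.2).
pose f2 (t : T * T * T) := (t.1.2, t.2).
pose A1 := f1 @: Qs E.
pose A2 := f2 @: Trs E.
pose A3 := if odd #|T| then set0 else (hw E) @: [set: T].
pose Pairs := [set p : T * T | p.1 != p.2].
have cP : #|Pairs| = #|T| * (#|T| - 1).
  have -> : Pairs = [set p : T * T | (p.1 \in [set: T]) && (p.2 \in [set~ p.1])].
    by apply/setP => p; rewrite !inE eq_sym.
  rewrite (card_pairs [set: T] (fun x => [set~ x])) (eq_bigr (fun _ => #|T| - 1)); last by move=> x _; rewrite cardsC1 subn1.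
  by rewrite sum_nat_const cardsT.
have QsP : forall a b c d, (a, b, c, d) \in Qs E ->
    [/\ adj E a b, adj E a c, adj E b c, adj E a d & (d != b) && (d != c)].
  by move=> a b c d; rewrite inE /= => /and4P[? ? ? /and3P[? -> ->]].
have TrsP : forall a b c, (a, b, c) \in Trs E -> [/\ adj E a b, adj E a c & adj E b c].
  by move=> a b c; rewrite inE /= => /and3P[? ? ?].
have c1 : #|A1| = #|Qs E|.
  apply: card_in_imset => -[[[a b] c] d] [[[a' b'] c'] d'] /QsP[ab ac bc ad /andP[db dc]]
    /QsP[ab' ac' bc' ad' /andP[db' dc']] [e1 e2]; subst b' d'.
  have ea : a = a'.
    apply: (uniq_cn c4 (x := b) (y := d)); rewrite 1?eq_sym // adjC //.
  subst a'; have ec : c = c' by apply: (uniq_cn c4 (adj_neq sE ab)).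
  by subst c'.
have c2 : #|A2| = #|Trs E|.
  apply: card_in_imset => -[[a b] c] [[a' b'] c'] /TrsP[ab ac bc] /TrsP[ab' ac' bc'] [e1 e2].
  subst b' c'; have ea : a = a'.
    by apply: (uniq_cn c4 (adj_neq sE bc)); rewrite adjC.
  by subst a'.
have c3 : #|A3| = if odd #|T| then 0 else #|T|.
  rewrite /A3; case: ifP => ev; first by rewrite cards0.
  rewrite card_in_imset ?cardsT // => w w' _ _.
  case: (hw_spec w sE c4 (negbT ev)) => [[u [-> uw nc]]|[x [y [-> xw xy yw nc]]]];
  case: (hw_spec w' sE c4 (negbT ev)) => [[u' [-> uw' nc']]|[x' [y' [-> xw' xy' yw' nc']]]];
  move=> [e1 e2] //; subst.
  - by rewrite (cn_of (z := x')) // adjC in nc.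
  - by rewrite (cn_of (z := x)) // adjC in nc'.
have d12 : A1 :&: A2 = set0.
  apply/setP => p; rewrite !inE; apply/negbTE/negP => /andP[/imsetP[[[[a b] c] d] /QsP[ab ac bc ad /andP[db dc]] ->]].
  move=> /imsetP[[[a' b'] c'] /TrsP[ab' ac' bc'] [e1 e2]]; subst b' c'.
  have ea : a = a'.
    apply: (uniq_cn c4 (x := b) (y := d)); rewrite 1?eq_sym // adjC //.
  subst a'; have ec : c = d by apply: (uniq_cn c4 (adj_neq sE ab)).
  by rewrite ec eqxx in dc.
have d13 : A1 :&: A3 = set0.
  rewrite /A3; case: ifP => ev; first by rewrite setI0.
  apply/setP => p; rewrite !inE; apply/negbTE/negP => /andP[/imsetP[[[[a b] c] d] /QsP[ab ac bc ad /andP[db dc]] ->]].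
  move=> /imsetP[w _].
  case: (hw_spec w sE c4 (negbT ev)) => [[u [-> uw nc]]|[x [y [-> xw xy yw nc]]]] [e1 e2]; subst.
  - by rewrite (cn_of (z := a)) // adjC in nc.
  - have ea : x = a.
      apply: (uniq_cn c4 (x := y) (y := w)); rewrite 1?adjC //.
    by subst x; rewrite (cn_of (z := c)) in nc.
have d23 : A2 :&: A3 = set0.
  rewrite /A3; case: ifP => ev; first by rewrite setI0.
  apply/setP => p; rewrite !inE; apply/negbTE/negP => /andP[/imsetP[[[a b] c] /TrsP[ab ac bc] ->]].
  move=> /imsetP[w _].
  case: (hw_spec w sE c4 (negbT ev)) => [[u [-> uw nc]]|[x [y [-> xw xy yw nc]]]] [e1 e2]; subst.
  - by rewrite (cn_of (z := a)) // adjC in nc.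
  - have ea : x = a.
      apply: (uniq_cn c4 (adj_neq sE bc)); rewrite 1?adjC //.
    by subst x; rewrite (cn_of (z := w)) in nc.
have sub : A1 :|: A2 :|: A3 \subset Pairs.
  apply/subsetP => p; rewrite !inE => /orP[/orP[]|].
  - by move=> /imsetP[[[[a b] c] d] /QsP[ab ac bc ad /andP[db dc]] ->]; rewrite /= eq_sym.
  - by move=> /imsetP[[[a b] c] /TrsP[ab ac bc] ->]; rewrite /= (adj_neq sE bc).
  - rewrite /A3; case: ifP => ev; first by rewrite inE.
    move=> /imsetP[w _ ->].
    case: (hw_spec w sE c4 (negbT ev)) => [[u [-> uw nc]]|[x [y [-> xw xy yw nc]]]] //=.
    by rewrite eq_sym.
move: (subset_leq_card sub); rewrite cP cardsU setIUl d13 d23 setU0 cards0 subn0.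
by rewrite cardsU d12 cards0 subn0 c1 c2 c3.
Qed.


Lemma bin2_mul2 n : 'C(n,2) * 2 = n * (n - 1).
Proof.
rewrite bin2; case: n => // n; rewrite subSS subn0 /=.
have := odd_double_half (n.+1 * n); rewrite oddM /= andNb add0n; lia.
Qed.

Definition fml (n : nat) := if odd n then 'C(n, 2) - 3 * (n.-1 %/ 2) else 'C(n, 2) + 3 - 2 * n.

Lemma upper (T : finType) (E : {set {set T}}) :
  simple_graph E -> num_copies C4 E == 0 -> 4 <= #|T| -> num_copies paw E <= fml #|T|.
Proof.
move=> sE c0 n4; have c4 := C4free_of sE c0.
have h1 := copies_Qlt E; have h2 := Qlt_Qs E; have h3 := Qs_Trs c4 sE.
have h4 := pairs_bound sE c4.
have hC := bin2_mul2 #|T|.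
have hd := odd_double_half #|T|.
move: h4 hd; rewrite /fml; set N := #|T|; set P := num_copies paw E.
set X := #|Qs E|; set Y := #|Trs E|; set q := #|Qlt E|; set C := 'C(N, 2).
have ePq : 2 * P <= X by lia.
have {hC} hC : C * 2 = N * (N - 1) := hC.
case: (odd N) => /= h4 hd.
- have h5 : N * X <= N * ((N - 1) * (N - 3)).
    have : N * X <= (N - 3) * (X + Y).
      have e : N * X = (N - 3) * X + 3 * X by rewrite -mulnDl subnK // ltnW.
      by rewrite e mulnDr leq_add2l [(N - 3) * Y]mulnC.
    move=> h; apply: leq_trans h _; rewrite mulnA [_ * (N - 3)]mulnC; apply: leq_mul => //.
    by move: h4; rewrite addn0.
  rewrite leq_pmul2l in h5; last by lia.
  move: hC hd h5 ePq; set m := N./2 => hC hd h5 ePq.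
  have eN : N = m.*2.+1 by lia.
  have em : N.-1 %/ 2 = m by rewrite eN; lia.
  rewrite em; rewrite eN in hC h5; move: hC h5 ePq; rewrite -!mul2n.
  have [k ->] : exists k, m = k.+2 by exists (m - 2); lia.
  move=> hC h5 ePq.
  have eC : C = (k.+2) * (2 * k.+2 + 1) by nia.
  rewrite eC; nia.
- have h5 : N * X <= N * ((N - 2) * (N - 3)).
    have : N * X <= (N - 3) * (X + Y).
      have e : N * X = (N - 3) * X + 3 * X by rewrite -mulnDl subnK // ltnW.
      by rewrite e mulnDr leq_add2l [(N - 3) * Y]mulnC.
    move=> h; apply: leq_trans h _; rewrite mulnA [_ * (N - 3)]mulnC; apply: leq_mul => //.
    have e : N * (N - 1) = N * (N - 2) + N by rewrite -mulnSr; congr (_ * _); lia.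
    by move: h4; rewrite e leq_add2r.
  rewrite leq_pmul2l in h5; last by lia.
  move: hC hd h5 ePq; set m := N./2 => hC hd h5 ePq.
  have eN : N = m.*2 by lia.
  rewrite eN in hC h5 *; move: hC h5 ePq; rewrite -!mul2n.
  have [k ->] : exists k, m = k.+2 by exists (m - 2); lia.
  move=> hC h5 ePq.
  have eC : C = (k.+2) * (2 * k.+2 - 1) by nia.
  rewrite eC; nia.
Qed.


Definition fc n (i j : 'I_n) : bool :=
  ((val i == 0) && (val j != 0)) || (odd (val i) && (val j == (val i).+1)).

Lemma fc_neq n (i j : 'I_n) : fc i j -> i != j.
Proof.
rewrite /fc => /orP[/andP[/eqP h1 h2]|/andP[_ /eqP h]]; apply/negP => /eqP e; subst.
- by rewrite h1 in h2.
- by move: h; lia.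
Qed.

Lemma adjF n (x y : 'I_n) : adj (friendship n) x y = fc x y || fc y x.
Proof.
rewrite /adj /friendship; apply/imset2P/orP.
- move=> [i j _]; rewrite inE => h /set2_eq [[-> ->]|[-> ->]]; by [left|right].
- move=> [h|h].
  + by exists x y => //; rewrite inE.
  + by exists y x => //; rewrite ?inE // setUC.
Qed.

Lemma simpleF n : simple_graph (friendship n).
Proof.
apply/forall_inP => e /imset2P[i j _]; rewrite inE => h ->.
by rewrite cards2 fc_neq.
Qed.

Lemma nz2 n (x y z : 'I_n) : val x != 0 -> val y != 0 -> val z != 0 ->
  adj (friendship n) x y -> adj (friendship n) x z -> y = z.
Proof.
move=> x0 y0 z0; rewrite !adjF /fc /= (negbTE x0) (negbTE y0) (negbTE z0) /=.
move=> /orP[/andP[ox /eqP ey]|/andP[oy /eqP ex]] /orP[/andP[ox' /eqP ez]|/andP[oz /eqP ex']];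
  apply: val_inj => /=.
- by rewrite ey ez.
- by move: ox; rewrite ex' /= oz.
- by move: ox'; rewrite ex /= oy.
- by move: ex ex'; lia.
Qed.

Lemma noC4F_aux n (b c d : 'I_n) : val b != 0 -> val c != 0 -> val d != 0 ->
  adj (friendship n) b c -> adj (friendship n) c d -> b != d -> False.
Proof.
move=> b0 c0 d0 bc cd bd.
have := nz2 c0 b0 d0; rewrite adjC => /(_ bc cd) e.
by rewrite e eqxx in bd.
Qed.

Lemma nz_of n (u v : 'I_n) : val u == 0 -> u != v -> val v != 0.
Proof.
move=> /eqP u0 uv; apply/negP => /eqP v0; case/negP: uv; apply/eqP/val_inj.
by rewrite u0 v0.
Qed.

Lemma C4freeF n : num_copies C4 (friendship n) == 0.
Proof.
rewrite /num_copies cards_eq0; apply/eqP/setP => p; rewrite inE in_set0.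
apply/negbTE/negP => /andP[sub /existsP[f /and3P[fi _ /eqP fE]]].
move: (inj4_neq fi) => /and3P[n01 n02 /and4P[n03 n12 n13 n23]].
rewrite C4_img in fE.
have inE' : forall x y, [set x; y] \in p.2 -> adj (friendship n) x y.
  by move=> x y h; rewrite /adj (subsetP sub).
have ab : adj (friendship n) (f i0) (f i1) by apply: inE'; rewrite -fE !inE eqxx.
have bc : adj (friendship n) (f i1) (f i2) by apply: inE'; rewrite -fE !inE eqxx !orbT.
have cd : adj (friendship n) (f i2) (f i3) by apply: inE'; rewrite -fE !inE eqxx !orbT.
have da : adj (friendship n) (f i3) (f i0) by apply: inE'; rewrite -fE !inE eqxx !orbT.
have n10 : f i1 != f i0 by rewrite eq_sym.
have n20 : f i2 != f i0 by rewrite eq_sym.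
have n30 : f i3 != f i0 by rewrite eq_sym.
have n21 : f i2 != f i1 by rewrite eq_sym.
have n31 : f i3 != f i1 by rewrite eq_sym.
have n32 : f i3 != f i2 by rewrite eq_sym.
case: (boolP (val (f i0) == 0)) => [h0|h0].
  exact: (noC4F_aux (nz_of h0 n01) (nz_of h0 n02) (nz_of h0 n03) bc cd n13).
case: (boolP (val (f i1) == 0)) => [h1|h1].
  exact: (noC4F_aux (nz_of h1 n12) (nz_of h1 n13) (nz_of h1 n10) cd da n20).
case: (boolP (val (f i2) == 0)) => [h2|h2].
  exact: (noC4F_aux (nz_of h2 n23) (nz_of h2 n20) (nz_of h2 n21) da ab n31).
exact: (noC4F_aux h0 h1 h2 ab bc n02).
Qed.


Lemma fml_low n : 3 <= n -> fml n.+1 <= n %/ 2 * (n.+1 - 3).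
Proof.
move=> n3; rewrite /fml.
have hC := bin2_mul2 n.+1.
have hd := odd_double_half n.
move: hC hd; set C := 'C(n.+1, 2); set j := n./2 => hC hd.
rewrite -/(n.+1.-1) /=.
case: (odd n) hd => /= hd.
- have en : n = j.*2.+1 by lia.
  have em : n %/ 2 = j by rewrite en; lia.
  rewrite em; rewrite en in hC *; move: hC; rewrite -!mul2n.
  have [k ->] : exists k, j = k.+1 by exists (j - 1); lia.
  move=> hC.
  have eC : C = (k.+2) * (2 * k.+1 + 1) by nia.
  rewrite eC; nia.
- have en : n = j.*2 by lia.
  have em : n %/ 2 = j by rewrite en; lia.
  rewrite em; rewrite en in hC *; move: hC; rewrite -!mul2n.
  have [k ->] : exists k, j = k.+2 by exists (j - 2); lia.
  move=> hC.
  have eC : C = (2 * k.+2 + 1) * k.+2 by nia.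
  rewrite eC; nia.
Qed.

Lemma neq_val n (x y : 'I_n) : val x != val y -> x != y.
Proof. by apply: contra => /eqP ->. Qed.

Lemma lowF n : 3 <= n -> fml n.+1 <= num_copies paw (friendship n.+1).
Proof.
move=> n3; apply: leq_trans (fml_low n3) _.
pose v0 : 'I_n.+1 := inord 0.
pose vb (k : nat) : 'I_n.+1 := inord k.*2.+1.
pose vc (k : nat) : 'I_n.+1 := inord k.*2.+2.
have v0E : nat_of_ord v0 = 0 by rewrite /v0 inordK.
have vbE : forall k : 'I_(n %/ 2), nat_of_ord (vb k) = k.*2.+1.
  by move=> k; rewrite /vb inordK //; have := ltn_ord k; lia.
have vcE : forall k : 'I_(n %/ 2), nat_of_ord (vc k) = k.*2.+2.
  by move=> k; rewrite /vc inordK //; have := ltn_ord k; lia.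
pose S (k : 'I_(n %/ 2)) := ~: [set v0; vb k; vc k].
pose D := [set p : 'I_(n %/ 2) * 'I_n.+1 | (p.1 \in [set: 'I_(n %/ 2)]) && (p.2 \in S p.1)].
pose h (p : 'I_(n %/ 2) * 'I_n.+1) := Gq (v0, vb p.1, vc p.1, p.2).
have cD : n %/ 2 * (n.+1 - 3) <= #|D|.
  rewrite /D card_pairs.
  have -> : n %/ 2 * (n.+1 - 3) = \sum_(k in [set: 'I_(n %/ 2)]) (n.+1 - 3).
    by rewrite sum_nat_const cardsT card_ord.
  apply: leq_sum => k _.
  have := cardsC [set v0; vb k; vc k].
  have : #|[set v0; vb k; vc k]| <= 3.
    by rewrite -setUA cardsU1 cards2; case: (_ \notin _); case: (_ != _).
  rewrite card_ord /S; lia.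
apply: (leq_trans cD).
have DP : forall k d, (k, d) \in D -> [&& d != v0, d != vb k & d != vc k].
  by move=> k d; rewrite !inE /= negb_or negb_or => /andP[/andP[-> ->] ->].
rewrite -(card_in_imset (f := h)); last first.
  move=> [k d] [k' d'] /DP /and3P[d0 db dc] /DP /and3P[d0' db' dc'] /(congr1 snd).
  rewrite /h /Gq /= => E12.
  have mem : forall x y, [set x; y] \in
      [set [set v0; vb k]; [set vb k; vc k]; [set v0; vc k]; [set v0; d]] ->
      [set x; y] \in [set [set v0; vb k']; [set vb k'; vc k']; [set v0; vc k']; [set v0; d']].
    by move=> x y; rewrite E12.
  have ek : k = k'.
    have := mem (vb k) (vc k); rewrite !inE eqxx orbT => /(_ isT).
    move=> /orP[/orP[/orP[]|]|] /eqP /set2_eq [[e1 e2]|[e1 e2]];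
      move/(congr1 val): e1; move/(congr1 val): e2; rewrite /= ?vbE ?vcE ?v0E => e2 e1;
      apply: val_inj => /=; lia.
  subst k'; congr (_, _).
  have := mem v0 d; rewrite !inE eqxx !orbT => /(_ isT).
  move=> /orP[/orP[/orP[]|]|] /eqP /set2_eq [[e1 e2]|[e1 e2]];
    try (by rewrite e2 eqxx in db); try (by rewrite e2 eqxx in dc); try (by rewrite e2 eqxx in d0);
    try (by rewrite e2);
    try (by move/(congr1 val): e1; rewrite /= ?vbE ?vcE ?v0E).

apply: subset_leq_card; apply/subsetP => p /imsetP[[k d] /DP /and3P[d0 db dc] ->].
have nb0 : vb k != v0 by apply: neq_val => /=; rewrite vbE v0E.
have nc0 : vc k != v0 by apply: neq_val => /=; rewrite vcE v0E.
have nbc : vb k != vc k by apply: neq_val => /=; rewrite vbE vcE; lia.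
rewrite inE; apply/andP; split.
  apply/subsetP => e; rewrite /h /Gq /= !inE => /orP[/orP[/orP[]|]|] /eqP ->;
    rewrite -/(adj _ _ _) adjF /fc /= ?vbE ?vcE ?v0E /=.
  all: try done.
  - by rewrite odd_double eqxx.
  - by rewrite -v0E (inj_eq val_inj) d0.
apply/existsP; exists (f4 v0 (vb k) (vc k) d).
rewrite setT_img paw_img; case: (f4E v0 (vb k) (vc k) d) => -> -> -> ->.
rewrite !eqxx !andbT; apply: f4_inj => //; rewrite 1?eq_sym //.
Qed.


Theorem theorem3p11 :
  exists n0 : nat, forall n : nat, n0 <= n ->
    ex_gen n paw C4 = num_copies paw (friendship n) /\
    num_copies paw (friendship n) =
      (if odd n then 'C(n, 2) - 3 * (n.-1 %/ 2) else 'C(n, 2) + 3 - 2 * n).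
Proof.
exists 4 => -[//|n] n4.
have n3 : 3 <= n by [].
have up : forall E : {set {set 'I_n.+1}}, simple_graph E && (num_copies C4 E == 0) ->
    num_copies paw E <= fml n.+1.
  move=> E /andP[sE c0]; have := upper sE c0; rewrite card_ord; exact.
have lo := lowF n3.
have eF : num_copies paw (friendship n.+1) = fml n.+1.
  apply/eqP; rewrite eqn_leq lo andbT; apply: up.
  by rewrite simpleF C4freeF.
split; last by rewrite eF.
apply/eqP; rewrite eqn_leq; apply/andP; split.
  by apply/bigmax_leqP => E hE; rewrite eF; apply: up.
by apply: (leq_bigmax_cond (F := fun E => num_copies paw E)); rewrite simpleF C4freeF.
Qed.
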